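(* For every integer $r\ge 1$, \[\frac{b}{4}\,\rho(r)\;\le\; \mathrm{Var}\big(\mu^{(r)}\big)\;\le\; 2b^2\,\rho(r).\]
   Context: Fix an integer $b\ge 2$. Every $n\in\mathbb{N}=\{0,1,2,\dots\}$ has a unique base-$b$ expansion $n=\sum_{k\ge0}n_kb^k$ with digits $n_k\in\{0,\dots,b-1\}$, finitely many nonzero; $s(n):=\sum_k n_k$ is the sum-of-digits function. For $r,n\in\mathbb{N}$ put $\Delta^{(r)}(n):=s(n+r)-s(n)$. For $d\in\mathbb{Z}$, $\mu^{(r)}(d):=\lim_{N\to\infty}\frac1N\big|\{n<N:\Delta^{(r)}(n)=d\}\big|$; these limits exist and $\mu^{(r)}$ is a probability measure on $\mathbb{Z}$ with finite moments of all orders. $\mathrm{Var}(\mu^{(r)})$ denotes its variance. Blocks: write the base-$b$ expansion of $r\ge1$ as the digit string $r_\ell\cdots r_0$ with $r_\ell\neq0$. A block of this string is either a maximal run of consecutive digits equal to $0$ (a block of $0$'s), or a maximal run of consecutive digits equal to $b-1$ (a block of $(b-1)$'s), or, when $b\ge3$, a single digit with value in $\{1,\dots,b-2\}$ (a single-digit block). The digit string is partitioned into its blocks; $\rho(r)$ denotes the number of blocks of $r$. *)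

(* Defs.v *)
From Stdlib Require Import Reals Lra Lia ZArith Arith List.
From Coquelicot Require Import Coquelicot.
Import ListNotations.
Open Scope R_scope.

(* Base-b digits of n, least significant first (no trailing zeros; [] for 0).
   The fuel n suffices since n / b < n for b >= 2 and n > 0. *)
Fixpoint digits_aux (b fuel n : nat) : list nat :=
  match fuel with
  | O => []
  | S f => if Nat.eqb n 0 then [] else Nat.modulo n b :: digits_aux b f (Nat.div n b)
  end.

Definition digits (b n : nat) : list nat := digits_aux b n n.

Definition sdig (b n : nat) : nat := fold_right Nat.add 0%nat (digits b n).

Definition Delta (b r n : nat) : Z := (Z.of_nat (sdig b (n + r)) - Z.of_nat (sdig b n))%Z.

Definition cnt (b r : nat) (d : Z) (N : nat) : nat :=
  length (filter (fun n => Z.eqb (Delta b r n) d) (seq 0 N)).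

Definition mu (b r : nat) (d : Z) : R :=
  real (Lim_seq (fun N => INR (cnt b r d N) / INR N)).

Definition sumZ (f : Z -> R) : R :=
  Series (fun k => f (Z.of_nat k)) + Series (fun k => f (- Z.of_nat (S k))%Z).

Definition mean_mu (b r : nat) : R := sumZ (fun d => IZR d * mu b r d).
Definition var_mu (b r : nat) : R :=
  sumZ (fun d => (IZR d - mean_mu b r) ^ 2 * mu b r d).

(* Number of blocks rho(r): count the positions of the digit string where a
   new block starts.  A position starts a block iff it is the first position
   scanned, or its digit is in {1,...,b-2} (single-digit block), or its digit
   differs from the previously scanned digit. *)
Fixpoint block_starts (b : nat) (prev : option nat) (l : list nat) : nat :=
  match l with
  | [] => O
  | d :: t =>
      let new := match prev with
                 | None => true
                 | Some p => orb (andb (Nat.ltb 0 d) (Nat.ltb d (b - 1)))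
                                 (negb (Nat.eqb d p))
                 end in
      ((if new then 1 else 0) + block_starts b (Some d) t)%nat
  end.

Definition rho (b r : nat) : nat := block_starts b None (digits b r).

Example rho_ex1 : rho 10 1900 = 3%nat. Proof. reflexivity. Qed.
Example rho_ex2 : rho 10 5500 = 3%nat. Proof. reflexivity. Qed.
Example rho_ex3 : rho 2 11 = 3%nat. Proof. reflexivity. Qed.
Example sdig_ex : sdig 10 1234 = 10%nat. Proof. reflexivity. Qed.

(* Main.v *)
Require Import Defs.
From Stdlib Require Import Reals ZArith Arith List Lra Lia.
From Coquelicot Require Import Coquelicot.
Import ListNotations.
Open Scope R_scope.

Lemma digits_aux_fuel b (Hb : (2 <= b)%nat) : forall f1 f2 n,
  (n <= f1)%nat -> (n <= f2)%nat -> digits_aux b f1 n = digits_aux b f2 n.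
Proof.
  induction f1 as [|f1 IH]; intros f2 n H1 H2.
  - assert (n = 0%nat) by lia; subst. destruct f2; reflexivity.
  - destruct f2 as [|f2].
    + assert (n = 0%nat) by lia; subst. reflexivity.
    + simpl. destruct (Nat.eqb n 0) eqn:E; [reflexivity|].
      apply Nat.eqb_neq in E. f_equal. apply IH.
      * assert (n / b < n)%nat by (apply Nat.div_lt; lia). lia.
      * assert (n / b < n)%nat by (apply Nat.div_lt; lia). lia.
Qed.

Lemma digits_eq b (Hb : (2 <= b)%nat) n :
  digits b n = if Nat.eqb n 0 then [] else (n mod b)%nat :: digits b (n / b).
Proof.
  unfold digits. destruct n as [|n]; [reflexivity|].
  simpl Nat.eqb. cbv iota. simpl. f_equal. apply digits_aux_fuel; auto.
  assert (S n / b < S n)%nat by (apply Nat.div_lt; lia). lia.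
Qed.

Lemma sdig_eq b (Hb : (2 <= b)%nat) n :
  sdig b n = if Nat.eqb n 0 then 0%nat else ((n mod b) + sdig b (n / b))%nat.
Proof.
  unfold sdig at 1. rewrite digits_eq by auto.
  destruct (Nat.eqb n 0); reflexivity.
Qed.

Lemma sdig0 b : sdig b 0 = 0%nat.
Proof. reflexivity. Qed.

Lemma sdig_lin b (Hb : (2 <= b)%nat) u y : (u < b)%nat ->
  sdig b (u + b * y) = (u + sdig b y)%nat.
Proof.
  intros Hu. rewrite (sdig_eq b Hb).
  destruct (Nat.eqb (u + b*y) 0) eqn:E.
  - apply Nat.eqb_eq in E. assert (u = 0%nat /\ y = 0%nat) as [-> ->] by nia. reflexivity.
  - f_equal.
    + rewrite Nat.mul_comm, Nat.Div0.mod_add. apply Nat.mod_small; auto.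
    + f_equal. rewrite Nat.mul_comm, Nat.div_add by lia. rewrite Nat.div_small; auto.
Qed.

Lemma split_digit b (Hb : (2 <= b)%nat) n : n = (n mod b + b * (n / b))%nat /\ (n mod b < b)%nat.
Proof. split. pose proof (Nat.div_mod n b). lia. apply Nat.mod_upper_bound; lia. Qed.

Lemma sdig_split b (Hb : (2 <= b)%nat) : forall K m q, (m < b ^ K)%nat ->
  sdig b (m + b ^ K * q) = (sdig b m + sdig b q)%nat.
Proof.
  induction K as [|K IH]; intros m q Hm.
  - simpl in Hm. assert (m = 0%nat) by lia. subst. simpl. rewrite Nat.add_0_r. reflexivity.
  - destruct (split_digit b Hb m) as [Em Hu].
    set (u := (m mod b)%nat) in *. set (m' := (m / b)%nat) in *.
    assert (Hm' : (m' < b ^ K)%nat).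
    { simpl in Hm. nia. }
    rewrite Em. replace (u + b * m' + b ^ S K * q)%nat with (u + b * (m' + b^K * q))%nat
      by (simpl; nia).
    rewrite !sdig_lin by auto. rewrite IH by auto. lia.
Qed.

Lemma sdig_le b (Hb : (2 <= b)%nat) n : (sdig b n <= n)%nat.
Proof.
  induction n as [n IH] using (well_founded_induction lt_wf).
  rewrite sdig_eq by auto. destruct (Nat.eqb n 0) eqn:E; [lia|].
  apply Nat.eqb_neq in E.
  assert (n / b < n)%nat by (apply Nat.div_lt; lia).
  specialize (IH _ H). destruct (split_digit b Hb n). nia.
Qed.

Fixpoint vv (b f q : nat) : nat :=
  match f with
  | O => O
  | S f' => if Nat.eqb (q mod b) (b - 1) then S (vv b f' (q / b)) else O
  end.
Definition vfun b q := vv b q q.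

Lemma vv_fuel b (Hb : (2 <= b)%nat) : forall f1 f2 q,
  (q <= f1)%nat -> (q <= f2)%nat -> vv b f1 q = vv b f2 q.
Proof.
  induction f1 as [|f1 IH]; intros f2 q H1 H2.
  - assert (q = 0%nat) by lia; subst. destruct f2; [reflexivity|]. simpl.
    rewrite Nat.Div0.mod_0_l. destruct (Nat.eqb 0 (b-1)) eqn:E; [apply Nat.eqb_eq in E; lia|reflexivity].
  - destruct f2 as [|f2].
    + assert (q = 0%nat) by lia; subst. simpl.
      rewrite Nat.Div0.mod_0_l. destruct (Nat.eqb 0 (b-1)) eqn:E; [apply Nat.eqb_eq in E; lia|reflexivity].
    + simpl. destruct (Nat.eqb (q mod b) (b-1)) eqn:E; [|reflexivity].
      apply Nat.eqb_eq in E. assert (q <> 0%nat) by (intro; subst; rewrite Nat.Div0.mod_0_l in E; lia).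
      assert (q / b < q)%nat by (apply Nat.div_lt; lia).
      f_equal. apply IH; lia.
Qed.

Lemma v_eq b (Hb : (2 <= b)%nat) q :
  vfun b q = if Nat.eqb (q mod b) (b - 1) then S (vfun b (q / b)) else O.
Proof.
  unfold vfun. destruct q as [|q].
  - simpl. rewrite Nat.Div0.mod_0_l. destruct (Nat.eqb 0 (b-1)) eqn:E; [apply Nat.eqb_eq in E; lia|reflexivity].
  - simpl vv at 1. destruct (Nat.eqb (S q mod b) (b-1)); [|reflexivity].
    f_equal. apply vv_fuel; auto. assert (S q / b < S q)%nat by (apply Nat.div_lt; lia). lia.
Qed.

Lemma v_lin b (Hb : (2 <= b)%nat) u y : (u < b)%nat ->
  vfun b (u + b * y) = if Nat.eqb u (b - 1) then S (vfun b y) else O.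
Proof.
  intros Hu. rewrite v_eq by auto.
  rewrite Nat.mul_comm, Nat.Div0.mod_add, Nat.div_add by lia.
  rewrite Nat.mod_small, Nat.div_small by auto. reflexivity.
Qed.

Lemma sdig_succ b (Hb : (2 <= b)%nat) q :
  (sdig b (q + 1) + (b - 1) * vfun b q = sdig b q + 1)%nat.
Proof.
  induction q as [q IH] using (well_founded_induction lt_wf).
  destruct (split_digit b Hb q) as [Eq Hu].
  set (u := (q mod b)%nat) in *. set (y := (q / b)%nat) in *.
  rewrite Eq. rewrite v_lin, sdig_lin by auto.
  destruct (Nat.eqb u (b-1)) eqn:E.
  - apply Nat.eqb_eq in E.
    replace (u + b * y + 1)%nat with (0 + b * (y + 1))%nat by lia.
    rewrite sdig_lin by lia.
    destruct (Nat.eq_dec q 0) as [Hq|Hq].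
    { subst u. rewrite Hq in E. rewrite Nat.Div0.mod_0_l in E. lia. }
    assert (y < q)%nat by (apply Nat.div_lt; lia).
    specialize (IH y H). lia.
  - apply Nat.eqb_neq in E.
    replace (u + b * y + 1)%nat with ((u + 1) + b * y)%nat by lia.
    rewrite sdig_lin by lia. lia.
Qed.

Fixpoint rsum (n : nat) (f : nat -> R) : R :=
  match n with O => 0 | S n => rsum n f + f n end.

Lemma rsum_ext n f g : (forall i, (i < n)%nat -> f i = g i) -> rsum n f = rsum n g.
Proof. induction n; intros H; simpl; [reflexivity|]. rewrite IHn by (intros; apply H; lia). rewrite H by lia. reflexivity. Qed.

Lemma rsum_plus n f g : rsum n (fun i => f i + g i) = rsum n f + rsum n g.
Proof. induction n; simpl; [lra|]. rewrite IHn. lra. Qed.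

Lemma rsum_scal n c f : rsum n (fun i => c * f i) = c * rsum n f.
Proof. induction n; simpl; [lra|]. rewrite IHn. lra. Qed.

Lemma rsum_const n c : rsum n (fun _ => c) = INR n * c.
Proof. induction n; simpl rsum; [simpl; lra|]. rewrite IHn, S_INR. lra. Qed.

Lemma rsum_zero n f : (forall i, (i < n)%nat -> f i = 0) -> rsum n f = 0.
Proof. intros H. rewrite (rsum_ext n f (fun _ => 0)) by auto. rewrite rsum_const. lra. Qed.

Lemma rsum_add n k f : rsum (n + k) f = rsum n f + rsum k (fun i => f (n + i)%nat).
Proof. induction k; simpl. rewrite Nat.add_0_r; lra. rewrite Nat.add_succ_r. simpl. rewrite IHk. lra. Qed.

Lemma rsum_mulsplit b M f : rsum (b * M) f = rsum M (fun q => rsum b (fun u => f (u + b * q)%nat)).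
Proof.
  induction M; simpl. rewrite Nat.mul_0_r. reflexivity.
  rewrite Nat.mul_succ_r, rsum_add, IHM. f_equal. apply rsum_ext. intros. f_equal. lia.
Qed.

Lemma rsum_swap n k f : rsum n (fun i => rsum k (fun j => f i j)) = rsum k (fun j => rsum n (fun i => f i j)).
Proof.
  induction n; simpl. rewrite rsum_zero; auto.
  rewrite IHn. rewrite <- rsum_plus. reflexivity.
Qed.

Lemma rsum_nonneg n f : (forall i, (i < n)%nat -> 0 <= f i) -> 0 <= rsum n f.
Proof. induction n; intros H; simpl; [lra|]. assert (0 <= f n) by (apply H; lia). assert (0 <= rsum n f) by (apply IHn; intros; apply H; lia). lra. Qed.

Lemma rsum_le n f g : (forall i, (i < n)%nat -> f i <= g i) -> rsum n f <= rsum n g.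
Proof. induction n; intros H; simpl; [lra|]. assert (f n <= g n) by (apply H; lia). assert (rsum n f <= rsum n g) by (apply IHn; intros; apply H; lia). lra. Qed.

Lemma sum_n_rsum f n : sum_n f n = rsum (S n) f.
Proof. induction n. rewrite sum_O. simpl. lra. rewrite sum_Sn, IHn. reflexivity. Qed.

Definition indb (x : bool) : R := if x then 1 else 0.

Lemma count_rsum (f : nat -> bool) N :
  INR (length (filter f (seq 0 N))) = rsum N (fun i => indb (f i)).
Proof.
  induction N; [reflexivity|].
  rewrite seq_S, filter_app, length_app. simpl. rewrite plus_INR, IHN.
  unfold indb. destruct (f N); simpl; lra.
Qed.

Lemma rsum_period f P (Hp : forall n, f (n + P)%nat = f n) q :
  rsum (q * P) f = INR q * rsum P f.
Proof.
  induction q. simpl. lra.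
  replace (S q * P)%nat with (q * P + P)%nat by lia.
  rewrite rsum_add, IHq, S_INR.
  assert (rsum P (fun i => f (q * P + i)%nat) = rsum P f).
  { apply rsum_ext. intros i _. clear IHq. induction q. f_equal.
    replace (S q * P + i)%nat with ((q * P + i) + P)%nat by lia. rewrite Hp. auto. }
  lra.
Qed.

Lemma periodic_lim f P (HP : (0 < P)%nat) (Hp : forall n, f (n + P)%nat = f n)
  (Hf : forall n, 0 <= f n <= 1) :
  is_lim_seq (fun N => rsum N f / INR N) (rsum P f / INR P).
Proof.
  set (c := rsum P f / INR P).
  assert (HPr : 0 < INR P) by (apply lt_0_INR; lia).
  apply is_lim_seq_le_le_loc with (u := fun N => c - INR P * / INR N) (w := fun N => c + INR P * / INR N).
  - exists 1%nat. intros N HN1.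
    assert (HNr : 0 < INR N) by (apply lt_0_INR; lia).
    pose proof (Nat.div_mod N P) as E. set (q := (N / P)%nat) in *. set (s := (N mod P)%nat) in *.
    assert (Hs : (s < P)%nat) by (apply Nat.mod_upper_bound; lia).
    assert (HR : rsum N f = INR q * rsum P f + rsum s (fun i => f (q * P + i)%nat)).
    { replace N with (q * P + s)%nat by lia. rewrite rsum_add, rsum_period by auto. reflexivity. }
    rewrite HR.
    assert (H1 : 0 <= rsum s (fun i => f (q * P + i)%nat) <= INR s).
    { split. apply rsum_nonneg. intros; apply Hf. rewrite <- (Rmult_1_r (INR s)), <- rsum_const. apply rsum_le. intros; apply Hf. }
    assert (H2 : 0 <= rsum P f <= INR P).
    { split. apply rsum_nonneg. intros; apply Hf. rewrite <- (Rmult_1_r (INR P)), <- rsum_const. apply rsum_le. intros; apply Hf. }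
    assert (HsP : INR s < INR P) by (apply lt_INR; auto).
    assert (HN : INR N = INR q * INR P + INR s) by (rewrite <- mult_INR, <- plus_INR; f_equal; lia).
    set (S0 := rsum s (fun i => f (q * P + i)%nat)) in *. set (R0 := rsum P f) in *.
    assert (Hd : rsum N f / INR N - c = (S0 * INR P - INR s * R0) * / (INR N * INR P)).
    { unfold c. rewrite HR, HN. field. split; lra. }
    assert (Hp1 : INR P * / INR N = (INR P * INR P) * / (INR N * INR P)) by (field; lra).
    assert (Hpos : 0 <= / (INR N * INR P)) by (apply Rlt_le, Rinv_0_lt_compat, Rmult_lt_0_compat; lra).
    assert (B1 : S0 * INR P - INR s * R0 <= INR P * INR P) by nra.
    assert (B2 : - (INR P * INR P) <= S0 * INR P - INR s * R0) by nra.
    assert (C1 := Rmult_le_compat_r _ _ _ Hpos B1).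
    assert (C2 := Rmult_le_compat_r _ _ _ Hpos B2).
    rewrite <- HR. split; lra.
  - assert (Hi : is_lim_seq (fun N => / INR N) 0).
    { replace (Finite 0) with (Rbar_inv p_infty) by reflexivity.
      apply is_lim_seq_inv. apply is_lim_seq_INR. discriminate. }
    replace (Finite c) with (Finite (c - INR P * 0)) by (f_equal; lra).
    apply is_lim_seq_minus'. apply is_lim_seq_const. apply (is_lim_seq_scal_l _ (INR P) 0). exact Hi.
  - assert (Hi : is_lim_seq (fun N => / INR N) 0).
    { replace (Finite 0) with (Rbar_inv p_infty) by reflexivity.
      apply is_lim_seq_inv. apply is_lim_seq_INR. discriminate. }
    replace (Finite c) with (Finite (c + INR P * 0)) by (f_equal; lra).
    apply is_lim_seq_plus'. apply is_lim_seq_const. apply (is_lim_seq_scal_l _ (INR P) 0). exact Hi.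
Qed.

Lemma series_rsum g (l : R) : is_lim_seq (fun n => rsum n g) l -> is_series g l.
Proof.
  intros H. apply is_lim_seq_incr_1 in H.
  assert (H2 : is_lim_seq (sum_n g) l).
  { eapply is_lim_seq_ext; [|exact H]. intros n. simpl. rewrite sum_n_rsum. reflexivity. }
  exact H2.
Qed.

Lemma rsum_series g (l : R) : is_series g l -> is_lim_seq (fun n => rsum n g) l.
Proof.
  intros H. assert (H2 : is_lim_seq (sum_n g) l) by exact H.
  apply is_lim_seq_incr_1.
  eapply is_lim_seq_ext; [|exact H2]. intros n. simpl. rewrite sum_n_rsum. reflexivity.
Qed.

Lemma finite_series u N : (forall k, (N <= k)%nat -> u k = 0) -> is_series u (rsum N u).
Proof.
  intros H. apply series_rsum. apply is_lim_seq_ext_loc with (fun _ => rsum N u).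
  - exists N. intros n Hn. replace n with (N + (n - N))%nat by lia.
    rewrite rsum_add. rewrite (rsum_zero (n - N)). lra. intros. apply H. lia.
  - apply is_lim_seq_const.
Qed.

Lemma rsum_rev n f : rsum n (fun i => f (n - 1 - i)%nat) = rsum n f.
Proof.
  induction n as [|n IH] in f |- *; [reflexivity|].
  simpl rsum at 1. replace (S n - 1 - n)%nat with 0%nat by lia.
  rewrite (rsum_ext n _ (fun i => (fun j => f (S j)) (n - 1 - i)%nat)) by (intros; f_equal; lia).
  rewrite (IH (fun j => f (S j))). replace (S n) with (1 + n)%nat by lia. rewrite rsum_add. simpl. replace (n - 0 - n)%nat with 0%nat by lia. lra.
Qed.

Lemma not_form e C i t i' : (0 < t < C)%nat -> (e + C * i + t)%nat <> (e + C * i')%nat.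
Proof.
  intros Ht E. destruct (Nat.le_gt_cases i' i).
  - assert (C * i' <= C * i)%nat by (apply Nat.mul_le_mono_l; lia). lia.
  - assert (C * S i <= C * i')%nat by (apply Nat.mul_le_mono_l; lia). rewrite Nat.mul_succ_r in H0. lia.
Qed.

Lemma sparse_series (u g : nat -> R) (e C : nat) (HC : (1 <= C)%nat)
  (Hu1 : forall i, u (e + C * i)%nat = g i)
  (Hu0 : forall k, u k <> 0 -> exists i, k = (e + C * i)%nat) l :
  is_series g l -> is_series u l.
Proof.
  intros Hg. apply rsum_series in Hg. apply series_rsum.
  assert (Z0 : forall k, (forall i, k <> (e + C * i)%nat) -> u k = 0).
  { intros k Hk. destruct (Req_dec (u k) 0) as [E|E]; auto. destruct (Hu0 k E) as [i Hi]. exfalso; eapply Hk; eauto. }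
  assert (Q : forall i, rsum (e + C * i) u = rsum i g).
  { induction i.
    - rewrite Nat.mul_0_r, Nat.add_0_r. apply rsum_zero. intros k Hk. apply Z0. intros i Hi. lia.
    - replace (e + C * S i)%nat with ((e + C * i) + (1 + (C - 1)))%nat by nia.
      rewrite (rsum_add (e + C * i)), (rsum_add 1), IHi. simpl rsum at 2. rewrite Nat.add_0_r, Hu1.
      rewrite (rsum_zero (C - 1)). simpl. lra. intros k Hk. apply Z0. intros i' Hi'.
      apply (not_form e C i (S k) i'). lia. rewrite <- Hi'. f_equal. }
  set (J := fun N => if (N <=? e)%nat then 0%nat else ((N - e - 1) / C + 1)%nat).
  apply is_lim_seq_ext with (fun N => rsum (J N) g).
  - intros N. unfold J. destruct (N <=? e)%nat eqn:E.
    + apply Nat.leb_le in E. simpl. symmetry. apply rsum_zero. intros k Hk. apply Z0. intros i Hi. lia.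
    + apply Nat.leb_gt in E.
      pose proof (Nat.div_mod (N - e - 1) C) as D.
      assert (Ht : ((N - e - 1) mod C < C)%nat) by (apply Nat.mod_upper_bound; lia).
      set (i := ((N - e - 1) / C)%nat) in *. set (t := ((N - e - 1) mod C)%nat) in *.
      replace N with ((e + C * i) + (1 + t))%nat by lia.
      rewrite (rsum_add (e + C * i)), (rsum_add 1), Q.
      replace (rsum 1 (fun i0 => u (e + C * i + i0)%nat)) with (g i) by (simpl; rewrite Nat.add_0_r, Hu1; lra).
      rewrite (rsum_zero t). replace (i + 1)%nat with (S i) by lia. simpl. lra.
      intros k Hk. apply Z0. intros i' Hi'.
      apply (not_form e C i (S k) i'). lia. rewrite <- Hi'. f_equal.
  - apply (is_lim_seq_subseq (fun n => rsum n g) l J); auto.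
    intros P [N0 HP]. exists (e + 1 + C * N0)%nat. intros n Hn. apply HP.
    unfold J. destruct (n <=? e)%nat eqn:E. apply Nat.leb_le in E. nia.
    assert (C * N0 / C <= (n - e - 1) / C)%nat by (apply Nat.div_le_mono; lia).
    rewrite Nat.mul_comm, Nat.div_mul in H by lia. lia.
Qed.

Definition is_sumZ (f : Z -> R) (l : R) : Prop :=
  exists l1 l2, is_series (fun k => f (Z.of_nat k)) l1 /\
    is_series (fun k => f (- Z.of_nat (S k))%Z) l2 /\ l = l1 + l2.

Lemma is_sumZ_sumZ f l : is_sumZ f l -> sumZ f = l.
Proof.
  intros (l1 & l2 & H1 & H2 & ->). unfold sumZ.
  rewrite (is_series_unique _ _ H1), (is_series_unique _ _ H2). reflexivity.
Qed.

Lemma is_sumZ_ext f g l : (forall d, f d = g d) -> is_sumZ f l -> is_sumZ g l.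
Proof.
  intros E (l1 & l2 & H1 & H2 & ->). exists l1, l2. split; [|split; [|reflexivity]].
  eapply is_series_ext; [|exact H1]. intros; apply E.
  eapply is_series_ext; [|exact H2]. intros; apply E.
Qed.

Lemma is_series_plusR (a c : nat -> R) la lc : is_series a la -> is_series c lc ->
  is_series (fun n => a n + c n) (la + lc).
Proof. intros. apply (is_series_plus a c la lc); auto. Qed.

Lemma is_series_scalR (x : R) (a : nat -> R) la : is_series a la ->
  is_series (fun n => x * a n) (x * la).
Proof. intros. apply (is_series_scal x a la); auto. Qed.

Lemma is_sumZ_plus f g lf lg : is_sumZ f lf -> is_sumZ g lg -> is_sumZ (fun d => f d + g d) (lf + lg).
Proof.
  intros (l1 & l2 & H1 & H2 & ->) (l3 & l4 & H3 & H4 & ->).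
  exists (l1 + l3), (l2 + l4). split; [|split].
  apply is_series_plusR; auto. apply is_series_plusR; auto. lra.
Qed.

Lemma is_sumZ_scal x f l : is_sumZ f l -> is_sumZ (fun d => x * f d) (x * l).
Proof.
  intros (l1 & l2 & H1 & H2 & ->). exists (x * l1), (x * l2). split; [|split].
  apply is_series_scalR; auto. apply is_series_scalR; auto. lra.
Qed.

Lemma is_series_zero_ext u : (forall k, u k = 0) -> is_series u 0.
Proof. intros H. pose proof (finite_series u 0 (fun k _ => H k)) as H1. exact H1. Qed.

Lemma is_series_zero : is_series (fun _ : nat => 0) 0.
Proof. apply is_series_zero_ext. auto. Qed.

Lemma is_sumZ_zero : is_sumZ (fun _ => 0) 0.
Proof. exists 0, 0. split; [|split]; try apply is_series_zero. lra. Qed.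

Lemma is_sumZ_rsum n (F : nat -> Z -> R) (L : nat -> R) :
  (forall m, (m < n)%nat -> is_sumZ (F m) (L m)) ->
  is_sumZ (fun d => rsum n (fun m => F m d)) (rsum n L).
Proof.
  induction n; intros H.
  - simpl. apply is_sumZ_zero.
  - simpl. apply is_sumZ_plus. apply IHn. intros; apply H; lia. apply H; lia.
Qed.

Definition phiZ (a : Z) (C : nat) (h : nat -> R) (d : Z) : R :=
  if (Z.leb d a && Z.eqb ((a - d) mod Z.of_nat C) 0)%bool
  then h (Z.to_nat ((a - d) / Z.of_nat C)) else 0.

Lemma phiZ_at a C h (HC : (1 <= C)%nat) j : phiZ a C h (a - Z.of_nat C * Z.of_nat j)%Z = h j.
Proof.
  unfold phiZ. replace (a - (a - Z.of_nat C * Z.of_nat j))%Z with (Z.of_nat j * Z.of_nat C)%Z by ring.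
  rewrite Z.mod_mul, Z.div_mul by lia.
  replace (Z.leb (a - Z.of_nat C * Z.of_nat j) a) with true by (symmetry; apply Z.leb_le; nia).
  simpl. rewrite Nat2Z.id. reflexivity.
Qed.

Lemma phiZ_supp a C h (HC : (1 <= C)%nat) d : phiZ a C h d <> 0 ->
  exists j, d = (a - Z.of_nat C * Z.of_nat j)%Z.
Proof.
  unfold phiZ. destruct (Z.leb d a) eqn:E1; [|simpl; lra].
  destruct (Z.eqb ((a - d) mod Z.of_nat C) 0) eqn:E2; [|simpl; lra]. intros _.
  apply Z.leb_le in E1. apply Z.eqb_eq in E2.
  exists (Z.to_nat ((a - d) / Z.of_nat C)).
  pose proof (Z.div_mod (a - d) (Z.of_nat C) ltac:(lia)) as D. rewrite E2 in D.
  assert (0 <= (a - d) / Z.of_nat C)%Z by (apply Z.div_pos; lia).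
  rewrite Z2Nat.id by auto. lia.
Qed.

Lemma sumZ_sparse a C h l (HC : (1 <= C)%nat) : is_series h l -> is_sumZ (phiZ a C h) l.
Proof.
  intros Hh.
  destruct (Z_lt_le_dec a 0) as [Ha|Ha].
  - exists 0, l. split; [|split; [|lra]].
    + apply is_series_zero_ext. intros k. unfold phiZ.
      replace (Z.leb (Z.of_nat k) a) with false by (symmetry; apply Z.leb_gt; lia). reflexivity.
    + apply sparse_series with (g := h) (e := Z.to_nat (- a - 1)) (C := C); auto.
      * intros i. rewrite <- (phiZ_at a C h HC i). f_equal. lia.
      * intros k Hk. destruct (phiZ_supp a C h HC _ Hk) as [j Hj].
        exists j. lia.
  - set (A := Z.to_nat a). set (j1 := (A / C + 1)%nat).
    assert (HA : a = Z.of_nat A) by (unfold A; lia).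
    pose proof (Nat.div_mod A C ltac:(lia)) as DA.
    assert (HmA : (A mod C < C)%nat) by (apply Nat.mod_upper_bound; lia).
    exists (rsum j1 h), (l - rsum j1 h). split; [|split; [|lra]].
    + set (g := fun i => if (i <? j1)%nat then h (j1 - 1 - i)%nat else 0).
      assert (Eg : rsum j1 h = rsum j1 g).
      { rewrite <- rsum_rev. apply rsum_ext. intros i Hi. unfold g.
        replace (i <? j1)%nat with true by (symmetry; apply Nat.ltb_lt; lia). reflexivity. }
      rewrite Eg.
      apply sparse_series with (g := g) (e := (A mod C)%nat) (C := C); auto.
      * intros i. unfold g. destruct (i <? j1)%nat eqn:E.
        -- apply Nat.ltb_lt in E. rewrite <- (phiZ_at a C h HC (j1 - 1 - i)). f_equal.
           unfold j1 in *. rewrite HA. nia.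
        -- apply Nat.ltb_ge in E. unfold phiZ.
           replace (Z.leb (Z.of_nat (A mod C + C * i)) a) with false. reflexivity.
           symmetry. apply Z.leb_gt. unfold j1 in *. nia.
      * intros k Hk. destruct (phiZ_supp a C h HC _ Hk) as [j Hj].
        assert (j <= A / C)%nat by nia.
        exists (A / C - j)%nat. nia.
      * apply finite_series. intros k Hk. unfold g.
        replace (k <? j1)%nat with false by (symmetry; apply Nat.ltb_ge; lia). reflexivity.
    + assert (Hj1 : (A < C * j1)%nat) by (unfold j1; nia).
      apply sparse_series with (g := fun i => h (j1 + i)%nat) (e := (C * j1 - A - 1)%nat) (C := C); auto.
      * intros i. rewrite <- (phiZ_at a C h HC (j1 + i)). f_equal. nia.
      * intros k Hk. destruct (phiZ_supp a C h HC _ Hk) as [j Hj].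
        assert (j1 <= j)%nat.
        { destruct (Nat.lt_ge_cases j j1); auto. unfold j1 in *. nia. }
        exists (j - j1)%nat. nia.
      * apply is_series_incr_n. unfold j1; lia.
        match goal with |- is_series _ ?x => replace x with l; [exact Hh|] end.
        rewrite sum_n_rsum. replace (S (Init.Nat.pred j1)) with j1 by (unfold j1; lia).
        cbv [plus AbelianMonoid.plus]. simpl. lra.
Qed.

Lemma lim_inv_Sn : is_lim_seq (fun n => / (INR n + 1)) 0.
Proof.
  replace (Finite 0) with (Rbar_inv p_infty) by reflexivity.
  apply is_lim_seq_inv; [|discriminate].
  pose proof is_lim_seq_INR as H. apply is_lim_seq_incr_1 in H.
  eapply is_lim_seq_ext; [|exact H]. intros n. cbv beta. rewrite S_INR. reflexivity.
Qed.

Lemma lim_sq_geom x : 0 < x < 1 -> is_lim_seq (fun n => (INR n + 1) ^ 2 * x ^ n) 0.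
Proof.
  intros Hx. apply ex_series_lim_0. apply ex_series_Rabs.
  apply ex_series_DAlembert with x. lra.
  - intros n. assert (0 < INR n + 1) by (pose proof (pos_INR n); lra).
    apply Rmult_integral_contrapositive_currified; apply pow_nonzero; lra.
  - apply is_lim_seq_ext with (fun n => (1 + / (INR n + 1)) * (1 + / (INR n + 1)) * x).
    + intros n. assert (0 < INR n + 1) by (pose proof (pos_INR n); lra).
      assert (0 < x ^ n) by (apply pow_lt; lra).
      rewrite S_INR. rewrite Rabs_pos_eq.
      * simpl. field. split; lra.
      * apply Rlt_le; unfold Rdiv; apply Rmult_lt_0_compat;
          [apply Rmult_lt_0_compat; apply pow_lt; lra
          |apply Rinv_0_lt_compat, Rmult_lt_0_compat; apply pow_lt; lra].
    + assert (H : is_lim_seq (fun n => (1 + / (INR n + 1)) * (1 + / (INR n + 1)) * x) ((1 + 0) * (1 + 0) * x)).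
      { apply is_lim_seq_mult'; [|apply is_lim_seq_const].
        apply is_lim_seq_mult'; apply is_lim_seq_plus'; try apply is_lim_seq_const; apply lim_inv_Sn. }
      replace ((1 + 0) * (1 + 0) * x) with x in H by ring. exact H.
Qed.

Lemma lim_pow_geom x k : 0 < x < 1 -> (k <= 2)%nat -> is_lim_seq (fun n => INR n ^ k * x ^ n) 0.
Proof.
  intros Hx Hk. apply is_lim_seq_le_le with (fun _ => 0) (fun n => (INR n + 1) ^ 2 * x ^ n).
  - intros n. pose proof (pos_INR n). assert (0 < x ^ n) by (apply pow_lt; lra).
    assert (0 <= INR n ^ k) by (apply pow_le; lra).
    assert (INR n ^ k <= (INR n + 1) ^ 2).
    { destruct k as [|[|[|k]]]; simpl; nra || lia. }
    split; [apply Rmult_le_pos; lra|]. apply Rmult_le_compat_r; lra.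
  - apply is_lim_seq_const.
  - apply lim_sq_geom; auto.
Qed.

Lemma telescope F x : is_lim_seq (fun n => F n * x ^ n) 0 ->
  is_series (fun j => F j * x ^ j - F (S j) * x ^ (S j)) (F 0%nat).
Proof.
  intros H. apply series_rsum.
  apply is_lim_seq_ext with (fun n => F 0%nat - F n * x ^ n).
  - intros n. induction n. simpl. lra. transitivity (rsum n (fun j => F j * x ^ j - F (S j) * x ^ (S j)) + (F n * x ^ n - F (S n) * x ^ (S n))); [rewrite <- IHn; ring|reflexivity].
  - replace (Finite (F 0%nat)) with (Finite (F 0%nat - 0)) by (f_equal; lra).
    apply is_lim_seq_minus'; [apply is_lim_seq_const|exact H].
Qed.

Lemma telescope_quad (al be ga x : R) : 0 < x < 1 ->
  is_series (fun j => (al + be * INR j + ga * INR j ^ 2) * x ^ j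
                     - (al + be * INR (S j) + ga * INR (S j) ^ 2) * x ^ (S j)) al.
Proof.
  intros Hx.
  assert (H : is_series (fun j => (al + be * INR j + ga * INR j ^ 2) * x ^ j
                     - (al + be * INR (S j) + ga * INR (S j) ^ 2) * x ^ (S j)) (al + be * INR 0 + ga * INR 0 ^ 2)).
  { apply (telescope (fun j => al + be * INR j + ga * INR j ^ 2) x).
    apply is_lim_seq_ext with (fun n => al * (INR n ^ 0 * x ^ n) + (be * (INR n ^ 1 * x ^ n) + ga * (INR n ^ 2 * x ^ n))).
    intros; simpl; ring.
    replace (Finite 0) with (Finite (al * 0 + (be * 0 + ga * 0))) by (f_equal; ring).
    apply is_lim_seq_plus'; [|apply is_lim_seq_plus'];
      apply is_lim_seq_scal_l with (lu := Finite 0); apply lim_pow_geom; auto. }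
  replace (al + be * INR 0 + ga * INR 0 ^ 2) with al in H by (simpl; ring). exact H.
Qed.

Lemma inv_lt1 y : 1 < y -> / y < 1.
Proof. intros H. apply Rmult_lt_reg_l with y. lra. rewrite Rinv_r by lra. lra. Qed.

Definition pj (b j : nat) : R := (INR b - 1) / INR b ^ (S j).

Lemma pj_series0 b : (2 <= b)%nat -> is_series (fun j => pj b j) 1.
Proof.
  intros Hb. assert (HB : 2 <= INR b) by (apply (le_INR 2); lia).
  eapply is_series_ext; [|apply (telescope_quad 1 0 0 (/ INR b))].
  - intros j. unfold pj. simpl. rewrite !pow_inv. field.
    split; [apply pow_nonzero; lra|lra].
  - split. apply Rinv_0_lt_compat; lra. apply inv_lt1; lra.
Qed.

Lemma pj_series1 b A : (2 <= b)%nat ->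
  is_series (fun j => (A - (INR b - 1) * INR j) * pj b j) (A - 1).
Proof.
  intros Hb. assert (HB : 2 <= INR b) by (apply (le_INR 2); lia).
  eapply is_series_ext; [|apply (telescope_quad (A - 1) (- (INR b - 1)) 0 (/ INR b))].
  - intros j. unfold pj. rewrite S_INR. simpl. rewrite !pow_inv. field.
    split; [apply pow_nonzero; lra|lra].
  - split. apply Rinv_0_lt_compat; lra. apply inv_lt1; lra.
Qed.

Lemma pj_series2 b A : (2 <= b)%nat ->
  is_series (fun j => (A - (INR b - 1) * INR j) ^ 2 * pj b j) (A ^ 2 - 2 * A + INR b + 1).
Proof.
  intros Hb. assert (HB : 2 <= INR b) by (apply (le_INR 2); lia).
  eapply is_series_ext; [|apply (telescope_quad (A ^ 2 - 2 * A + INR b + 1)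
      (- 2 * A * (INR b - 1) + 2 * (INR b - 1)) ((INR b - 1) ^ 2) (/ INR b))].
  - intros j. unfold pj. rewrite S_INR. simpl. rewrite !pow_inv. field.
    split; [apply pow_nonzero; lra|lra].
  - split. apply Rinv_0_lt_compat; lra. apply inv_lt1; lra.
Qed.

Definition Wz (b r K m : nat) : Z :=
  (Z.of_nat (sdig b ((m + r) mod b ^ K)) - Z.of_nat (sdig b m))%Z.
Definition eps (b r K m : nat) : bool := Nat.leb (b ^ K) (m + r).

Lemma powpos b K : (2 <= b)%nat -> (0 < b ^ K)%nat.
Proof. intros. apply Nat.neq_0_lt_0. apply Nat.pow_nonzero. lia. Qed.

Lemma Delta_decomp b r K m (q : nat) (Hb : (2 <= b)%nat) (Hm : (m < b ^ K)%nat) (Hr : (r <= b ^ K)%nat) :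
  Defs.Delta b r (m + b ^ K * q)%nat =
  (Wz b r K m + if eps b r K m then 1 - Z.of_nat (b - 1) * Z.of_nat (vfun b q) else 0)%Z.
Proof.
  unfold Defs.Delta, Wz, eps. rewrite (sdig_split b Hb K m q Hm).
  pose proof (sdig_succ b Hb q) as Hs.
  destruct (Nat.leb (b ^ K) (m + r)) eqn:E.
  - apply Nat.leb_le in E.
    assert (Hmod : ((m + r) mod b ^ K = m + r - b ^ K)%nat).
    { replace (m + r)%nat with ((m + r - b ^ K) + 1 * b ^ K)%nat at 1 by lia.
      rewrite Nat.Div0.mod_add. apply Nat.mod_small. lia. }
    rewrite Hmod.
    replace (m + b ^ K * q + r)%nat with ((m + r - b ^ K) + b ^ K * (q + 1))%nat by nia.
    rewrite (sdig_split b Hb K) by lia. lia.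
  - apply Nat.leb_gt in E. rewrite Nat.mod_small by lia.
    replace (m + b ^ K * q + r)%nat with ((m + r) + b ^ K * q)%nat by lia.
    rewrite (sdig_split b Hb K) by lia. lia.
Qed.

Lemma Wz_bound b r K m (Hb : (2 <= b)%nat) : (- Z.of_nat (b ^ K) < Wz b r K m < Z.of_nat (b ^ K))%Z \/ (m >= b ^ K)%nat.
Proof.
  destruct (Nat.lt_ge_cases m (b ^ K)) as [H|H]; [left|right; lia].
  unfold Wz. pose proof (sdig_le b Hb m). pose proof (sdig_le b Hb ((m + r) mod b ^ K)).
  assert ((m + r) mod b ^ K < b ^ K)%nat by (apply Nat.mod_upper_bound; pose proof (powpos b K Hb); lia).
  lia.
Qed.

Lemma v_shift b (Hb : (2 <= b)%nat) : forall T q,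
  ((vfun b q < T)%nat -> vfun b (q + b ^ T) = vfun b q) /\
  ((T <= vfun b q)%nat -> (T <= vfun b (q + b ^ T))%nat).
Proof.
  induction T as [|T IH]; intros q.
  - split; intros; lia.
  - destruct (split_digit b Hb q) as [Eq Hu].
    set (u := (q mod b)%nat) in *. set (y := (q / b)%nat) in *.
    replace (q + b ^ S T)%nat with (u + b * (y + b ^ T))%nat by (rewrite Eq at 1; simpl; lia).
    rewrite Eq. rewrite !v_lin by auto.
    destruct (Nat.eqb u (b - 1)).
    + destruct (IH y) as [I1 I2]. split; intros H.
      * rewrite I1; lia.
      * specialize (I2 ltac:(lia)). lia.
    + split; intros; lia.
Qed.

Definition wfun (b r K m : nat) (d : Z) : R :=
  if eps b r K m then phiZ (Wz b r K m + 1) (b - 1) (pj b) d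
  else (if Z.eqb (Wz b r K m) d then 1 else 0).

Lemma rsum_last_special b (g : nat -> R) x y : (1 <= b)%nat ->
  (forall u, (u < b - 1)%nat -> g u = x) -> g (b - 1)%nat = y ->
  rsum b g = INR (b - 1) * x + y.
Proof.
  intros Hb H1 H2. replace b with ((b - 1) + 1)%nat at 1 by lia.
  rewrite rsum_add. rewrite (rsum_ext _ _ (fun _ => x)) by auto. rewrite rsum_const.
  simpl. rewrite Nat.add_0_r, H2. lra.
Qed.

Lemma count_v b (Hb : (2 <= b)%nat) : forall T j, (j < T)%nat ->
  rsum (b ^ T) (fun q => indb (Nat.eqb (vfun b q) j)) = INR (b ^ T) * pj b j.
Proof.
  assert (HB : 2 <= INR b) by (apply (le_INR 2); lia).
  assert (Hb1 : INR (b - 1) = INR b - 1) by (rewrite minus_INR by lia; simpl; lra).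
  induction T as [|T IH]; intros j Hj; [lia|].
  replace (b ^ S T)%nat with (b * b ^ T)%nat by reflexivity.
  rewrite rsum_mulsplit.
  destruct j as [|j].
  - rewrite (rsum_ext _ _ (fun _ => INR (b - 1))).
    + rewrite rsum_const, mult_INR, pow_INR. unfold pj. rewrite Hb1. simpl. field. lra.
    + intros q _. rewrite (rsum_last_special b _ 1 0); [lra|lia| |].
      * intros u Hu. rewrite v_lin by lia. replace (Nat.eqb u (b-1)) with false by (symmetry; apply Nat.eqb_neq; lia). reflexivity.
      * rewrite v_lin by lia. rewrite Nat.eqb_refl. reflexivity.
  - rewrite (rsum_ext _ _ (fun q => indb (Nat.eqb (vfun b q) j))).
    + rewrite IH by lia. rewrite mult_INR, !pow_INR. unfold pj. simpl. field. split; [apply pow_nonzero|]; lra.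
    + intros q _. rewrite (rsum_last_special b _ 0 (indb (Nat.eqb (vfun b q) j))); [lra|lia| |].
      * intros u Hu. rewrite v_lin by lia. replace (Nat.eqb u (b-1)) with false by (symmetry; apply Nat.eqb_neq; lia). reflexivity.
      * rewrite v_lin by lia. rewrite Nat.eqb_refl. reflexivity.
Qed.

Lemma Wz_bound' b r K m (Hb : (2 <= b)%nat) : (m < b ^ K)%nat ->
  (- Z.of_nat (b ^ K) < Wz b r K m < Z.of_nat (b ^ K))%Z.
Proof. intros H. destruct (Wz_bound b r K m Hb); [auto|lia]. Qed.

Lemma f_eq_neq b (Hb : (2 <= b)%nat) (a d : Z) (v T : nat) :
  (a - d < Z.of_nat T)%Z -> (T <= v)%nat ->
  Z.eqb (a - Z.of_nat (b - 1) * Z.of_nat v) d = false.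
Proof. intros H1 H2. apply Z.eqb_neq. nia. Qed.

Lemma mu_formula b r K d (Hb : (2 <= b)%nat) (HrK : (r <= b ^ K)%nat) :
  mu b r d = / INR (b ^ K) * rsum (b ^ K) (fun m => wfun b r K m d).
Proof.
  set (BK := (b ^ K)%nat). assert (HBK : (0 < BK)%nat) by (apply powpos; auto).
  set (T := (BK + 2 + Z.to_nat (Z.abs d))%nat).
  set (P := (BK * b ^ T)%nat).
  assert (HP : (0 < P)%nat) by (unfold P; pose proof (powpos b T Hb); nia).
  set (f := fun n => indb (Z.eqb (Defs.Delta b r n) d)).
  assert (Hf : forall m q, (m < BK)%nat -> f (m + BK * q)%nat =
     indb (Z.eqb (Wz b r K m + if eps b r K m then 1 - Z.of_nat (b - 1) * Z.of_nat (vfun b q) else 0)%Z d)).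
  { intros m q Hm. unfold f, BK. rewrite Delta_decomp; auto. }
  assert (Hper : forall n, f (n + P)%nat = f n).
  { intros n. pose proof (Nat.div_mod n BK ltac:(lia)) as En.
    assert (Hm : (n mod BK < BK)%nat) by (apply Nat.mod_upper_bound; lia).
    set (m := (n mod BK)%nat) in *. set (q := (n / BK)%nat) in *.
    replace (n + P)%nat with (m + BK * (q + b ^ T))%nat by (unfold P; nia).
    rewrite Hf by auto. replace (f n) with (f (m + BK * q)%nat) by (f_equal; lia).
    rewrite Hf by auto. f_equal.
    destruct (eps b r K m); [|reflexivity].
    pose proof (Wz_bound' b r K m Hb Hm) as HW. fold BK in HW.
    destruct (v_shift b Hb T q) as [V1 V2].
    destruct (Nat.lt_ge_cases (vfun b q) T) as [Hv|Hv].
    - rewrite V1 by auto. reflexivity.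
    - specialize (V2 Hv).
      replace (Wz b r K m + (1 - Z.of_nat (b - 1) * Z.of_nat (vfun b (q + b ^ T))))%Z
        with ((Wz b r K m + 1) - Z.of_nat (b - 1) * Z.of_nat (vfun b (q + b ^ T)))%Z by ring.
      replace (Wz b r K m + (1 - Z.of_nat (b - 1) * Z.of_nat (vfun b q)))%Z
        with ((Wz b r K m + 1) - Z.of_nat (b - 1) * Z.of_nat (vfun b q))%Z by ring.
      rewrite (f_eq_neq b Hb _ d _ T), (f_eq_neq b Hb _ d _ T); auto; unfold T; lia. }
  assert (Hf01 : forall n, 0 <= f n <= 1) by (intros n; unfold f, indb; destruct (Z.eqb _ _); lra).
  pose proof (periodic_lim f P HP Hper Hf01) as Hlim.
  unfold mu.
  rewrite (Lim_seq_ext _ (fun N => rsum N f / INR N)).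
  2:{ intros N. unfold cnt. rewrite count_rsum. reflexivity. }
  rewrite (is_lim_seq_unique _ _ Hlim). simpl.
  unfold P. rewrite rsum_mulsplit, rsum_swap.
  rewrite (rsum_ext BK _ (fun m => INR (b ^ T) * wfun b r K m d)).
  - rewrite rsum_scal, mult_INR. field. split; apply not_0_INR; pose proof (powpos b T Hb); lia.
  - intros m Hm.
    rewrite (rsum_ext _ _ (fun q => indb (Z.eqb (Wz b r K m + if eps b r K m then 1 - Z.of_nat (b - 1) * Z.of_nat (vfun b q) else 0)%Z d))) by (intros; apply Hf; auto).
    pose proof (Wz_bound' b r K m Hb Hm) as HW. fold BK in HW.
    unfold wfun. destruct (eps b r K m).
    + unfold phiZ. set (a := (Wz b r K m + 1)%Z).
      destruct (Z.leb d a && Z.eqb ((a - d) mod Z.of_nat (b - 1)) 0)%bool eqn:Ec.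
      * apply Bool.andb_true_iff in Ec as [E1 E2]. apply Z.leb_le in E1. apply Z.eqb_eq in E2.
        pose proof (Z.div_mod (a - d) (Z.of_nat (b - 1)) ltac:(lia)) as D. rewrite E2 in D.
        assert (Hq0 : (0 <= (a - d) / Z.of_nat (b - 1))%Z) by (apply Z.div_pos; lia).
        set (j := Z.to_nat ((a - d) / Z.of_nat (b - 1))).
        assert (Hj : (a - d = Z.of_nat (b - 1) * Z.of_nat j)%Z) by (unfold j; rewrite Z2Nat.id; lia).
        rewrite <- (count_v b Hb T j).
        -- apply rsum_ext. intros q _. f_equal.
           destruct (Nat.eqb (vfun b q) j) eqn:Ev.
           ++ apply Nat.eqb_eq in Ev. apply Z.eqb_eq. rewrite Ev. unfold a in Hj. lia.
           ++ apply Nat.eqb_neq in Ev. apply Z.eqb_neq. intro C. apply Ev.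
              assert (Z.of_nat (b - 1) * Z.of_nat (vfun b q) = Z.of_nat (b - 1) * Z.of_nat j)%Z by (unfold a in Hj; lia).
              apply Nat2Z.inj. apply Z.mul_reg_l with (Z.of_nat (b - 1)); lia.
        -- unfold T. assert (Z.of_nat j <= Z.of_nat (b - 1) * Z.of_nat j)%Z by nia. lia.
      * rewrite rsum_zero; [lra|]. intros q _. unfold indb.
        destruct (Z.eqb _ d) eqn:Eq; [|reflexivity].
        apply Z.eqb_eq in Eq. exfalso.
        assert (E1 : (d <= a)%Z) by (unfold a; nia).
        assert (E2 : ((a - d) mod Z.of_nat (b - 1) = 0)%Z).
        { replace (a - d)%Z with (Z.of_nat (vfun b q) * Z.of_nat (b - 1))%Z by (unfold a; lia).
          apply Z.mod_mul. lia. }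
        apply Z.leb_le in E1. apply Z.eqb_eq in E2. rewrite E1, E2 in Ec. discriminate.
    + rewrite (rsum_ext _ _ (fun _ => if Z.eqb (Wz b r K m) d then 1 else 0)).
      * rewrite rsum_const, pow_INR. lra.
      * intros q _. rewrite Z.add_0_r. reflexivity.
Qed.

Lemma phiZ_mul (G : Z -> R) a C h d (HC : (1 <= C)%nat) :
  G d * phiZ a C h d = phiZ a C (fun j => G (a - Z.of_nat C * Z.of_nat j)%Z * h j) d.
Proof.
  unfold phiZ. destruct (Z.leb d a && Z.eqb ((a - d) mod Z.of_nat C) 0)%bool eqn:Ec; [|ring].
  apply Bool.andb_true_iff in Ec as [E1 E2]. apply Z.leb_le in E1. apply Z.eqb_eq in E2.
  pose proof (Z.div_mod (a - d) (Z.of_nat C) ltac:(lia)) as D. rewrite E2 in D.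
  assert (0 <= (a - d) / Z.of_nat C)%Z by (apply Z.div_pos; lia).
  f_equal. f_equal. rewrite Z2Nat.id by auto. lia.
Qed.

Lemma point_mass (G : Z -> R) w : is_sumZ (fun d => G d * (if Z.eqb w d then 1 else 0)) (G w).
Proof.
  set (de := fun j : nat => if Nat.eqb j 0 then 1 else 0).
  apply is_sumZ_ext with (fun d => phiZ w 1 (fun j => G (w - Z.of_nat 1 * Z.of_nat j)%Z * de j) d).
  - intros d. rewrite <- phiZ_mul by lia. f_equal. unfold phiZ, de.
    rewrite Z.mod_1_r, Z.div_1_r. simpl Z.eqb.
    destruct (Z.eqb w d) eqn:E.
    + apply Z.eqb_eq in E. subst. rewrite Z.leb_refl, Z.sub_diag. reflexivity.
    + apply Z.eqb_neq in E. destruct (Z.leb d w) eqn:E2; simpl; [|reflexivity].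
      apply Z.leb_le in E2. replace (Nat.eqb (Z.to_nat (w - d)) 0) with false; [reflexivity|].
      symmetry. apply Nat.eqb_neq. lia.
  - apply sumZ_sparse; [lia|].
    replace (G w) with (rsum 1 (fun j => G (w - Z.of_nat 1 * Z.of_nat j)%Z * de j)).
    + apply finite_series. intros k Hk. unfold de. destruct k; [lia|]. simpl. ring.
    + simpl. unfold de. simpl. rewrite Z.sub_0_r. ring.
Qed.

Lemma IZR_lin a (b j : nat) : (1 <= b)%nat ->
  IZR (a - Z.of_nat (b - 1) * Z.of_nat j) = IZR a - (INR b - 1) * INR j.
Proof.
  intros Hb. rewrite minus_IZR, mult_IZR, <- !INR_IZR_INZ, minus_INR by lia. simpl. ring.
Qed.

Lemma sumZ_m1 b r K m (Hb : (2 <= b)%nat) :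
  is_sumZ (fun d => IZR d * wfun b r K m d) (IZR (Wz b r K m)).
Proof.
  unfold wfun. destruct (eps b r K m).
  - eapply is_sumZ_ext. intros d. symmetry. apply (phiZ_mul IZR); lia.
    apply sumZ_sparse; [lia|].
    match goal with |- is_series _ ?x => replace x with (IZR (Wz b r K m + 1) - 1) by (rewrite plus_IZR; ring) end.
    eapply is_series_ext; [|apply (pj_series1 b (IZR (Wz b r K m + 1))); auto].
    intros j. simpl. rewrite IZR_lin by lia. reflexivity.
  - apply point_mass.
Qed.

Lemma sumZ_m2 b r K m (Hb : (2 <= b)%nat) :
  is_sumZ (fun d => IZR d ^ 2 * wfun b r K m d)
    (IZR (Wz b r K m) ^ 2 + if eps b r K m then INR b else 0).
Proof.
  unfold wfun. destruct (eps b r K m).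
  - eapply is_sumZ_ext. intros d. symmetry. apply (phiZ_mul (fun d => IZR d ^ 2)); lia.
    apply sumZ_sparse; [lia|].
    match goal with |- is_series _ ?x => replace x with (IZR (Wz b r K m + 1) ^ 2 - 2 * IZR (Wz b r K m + 1) + INR b + 1) by (rewrite plus_IZR; ring) end.
    eapply is_series_ext; [|apply (pj_series2 b (IZR (Wz b r K m + 1))); auto].
    intros j. simpl. rewrite IZR_lin by lia. reflexivity.
  - rewrite Rplus_0_r. apply (point_mass (fun d => IZR d ^ 2)).
Qed.

Lemma W_sum_zero b t K (Hb : (2 <= b)%nat) (Ht : (t <= b ^ K)%nat) :
  rsum (b ^ K) (fun m => IZR (Wz b t K m)) = 0.
Proof.
  set (BK := (b ^ K)%nat). fold BK in Ht.
  unfold Wz. fold BK.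
  rewrite (rsum_ext _ _ (fun m => INR (sdig b ((m + t) mod BK)) - INR (sdig b m)))
    by (intros; rewrite minus_IZR, <- !INR_IZR_INZ; reflexivity).
  rewrite (rsum_ext _ _ (fun m => INR (sdig b ((m + t) mod BK)) + (-1) * INR (sdig b m))) by (intros; ring).
  rewrite rsum_plus, rsum_scal.
  assert (E1 : rsum BK (fun m => INR (sdig b ((m + t) mod BK))) =
               rsum (BK - t) (fun m => INR (sdig b (t + m))) + rsum t (fun i => INR (sdig b i))).
  { replace BK with ((BK - t) + t)%nat at 1 by lia. rewrite rsum_add. f_equal.
    - apply rsum_ext. intros i Hi. rewrite Nat.mod_small by lia. f_equal. f_equal. lia.
    - apply rsum_ext. intros i Hi. f_equal. f_equal.
      replace (BK - t + i + t)%nat with (i + 1 * BK)%nat by lia.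
      rewrite Nat.Div0.mod_add. apply Nat.mod_small. lia. }
  assert (E2 : rsum BK (fun m => INR (sdig b m)) =
               rsum t (fun i => INR (sdig b i)) + rsum (BK - t) (fun m => INR (sdig b (t + m)))).
  { replace BK with (t + (BK - t))%nat at 1 by lia. apply rsum_add. }
  rewrite E1, E2. ring.
Qed.

Lemma eps_count b r K x (Hb : (2 <= b)%nat) (Hr : (r <= b ^ K)%nat) :
  rsum (b ^ K) (fun m => if eps b r K m then x else 0) = INR r * x.
Proof.
  set (BK := (b ^ K)%nat). fold BK in Hr.
  replace BK with ((BK - r) + r)%nat at 1 by lia. rewrite rsum_add.
  rewrite rsum_zero. rewrite (rsum_ext _ _ (fun _ => x)). rewrite rsum_const. ring.
  - intros i Hi. unfold eps. fold BK. replace (Nat.leb BK (BK - r + i + r)) with true; [reflexivity|].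
    symmetry. apply Nat.leb_le. lia.
  - intros i Hi. unfold eps. fold BK. replace (Nat.leb BK (i + r)) with false; [reflexivity|].
    symmetry. apply Nat.leb_gt. lia.
Qed.

Theorem var_formula b r K (Hb : (2 <= b)%nat) (Hr : (r <= b ^ K)%nat) :
  var_mu b r = / INR (b ^ K) * rsum (b ^ K) (fun m => IZR (Wz b r K m) ^ 2) + INR b * INR r / INR (b ^ K).
Proof.
  assert (HBK : 0 < INR (b ^ K)) by (apply lt_0_INR, powpos; auto).
  assert (Hmean : mean_mu b r = 0).
  { unfold mean_mu. apply is_sumZ_sumZ.
    apply is_sumZ_ext with (fun d => / INR (b ^ K) * rsum (b ^ K) (fun m => IZR d * wfun b r K m d)).
    - intros d. rewrite mu_formula with (K := K) by auto. rewrite rsum_scal. ring.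
    - replace 0 with (/ INR (b ^ K) * rsum (b ^ K) (fun m => IZR (Wz b r K m))).
      + apply is_sumZ_scal. apply is_sumZ_rsum. intros m _. apply sumZ_m1; auto.
      + rewrite W_sum_zero by auto. ring. }
  unfold var_mu. rewrite Hmean. apply is_sumZ_sumZ.
  apply is_sumZ_ext with (fun d => / INR (b ^ K) * rsum (b ^ K) (fun m => IZR d ^ 2 * wfun b r K m d)).
  - intros d. rewrite mu_formula with (K := K) by auto. rewrite rsum_scal. ring.
  - replace (/ INR (b ^ K) * rsum (b ^ K) (fun m => IZR (Wz b r K m) ^ 2) + INR b * INR r / INR (b ^ K))
      with (/ INR (b ^ K) * rsum (b ^ K) (fun m => IZR (Wz b r K m) ^ 2 + if eps b r K m then INR b else 0)).
    + apply is_sumZ_scal. apply is_sumZ_rsum. intros m _. apply sumZ_m2; auto.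
    + rewrite rsum_plus, eps_count by auto. field. lra.
Qed.

Lemma mod_step b K u y (Hb : (2 <= b)%nat) : (u < b)%nat ->
  ((u + b * y) mod b ^ S K = u + b * (y mod b ^ K))%nat.
Proof.
  intros Hu. pose proof (powpos b K Hb) as HK.
  pose proof (Nat.div_mod y (b ^ K) ltac:(lia)) as Dy.
  assert (Hm : (y mod b ^ K < b ^ K)%nat) by (apply Nat.mod_upper_bound; lia).
  replace (u + b * y)%nat with ((u + b * (y mod b ^ K)) + (y / b ^ K) * b ^ S K)%nat by (simpl; nia).
  rewrite Nat.Div0.mod_add. apply Nat.mod_small. simpl. nia.
Qed.

Definition kap b x u : nat := if (u + x <? b)%nat then 0%nat else 1%nat.

Lemma Wz_step b K x t u m (Hb : (2 <= b)%nat) (Hu : (u < b)%nat) (Hx : (x <= b)%nat) :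
  IZR (Wz b (x + b * t) (S K) (u + b * m)) =
  INR x - INR b * INR (kap b x u) + IZR (Wz b (t + kap b x u) K m).
Proof.
  unfold Wz, kap. rewrite (sdig_lin b Hb u m Hu).
  destruct (u + x <? b)%nat eqn:E.
  - apply Nat.ltb_lt in E.
    replace (u + b * m + (x + b * t))%nat with ((u + x) + b * (m + t))%nat by lia.
    rewrite mod_step by auto. rewrite sdig_lin by auto. rewrite Nat.add_0_r.
    rewrite !minus_IZR, <- !INR_IZR_INZ, !plus_INR. simpl. ring.
  - apply Nat.ltb_ge in E.
    replace (u + b * m + (x + b * t))%nat with ((u + x - b) + b * (m + (t + 1)))%nat by lia.
    rewrite mod_step by lia. rewrite sdig_lin by lia.
    rewrite !minus_IZR, <- !INR_IZR_INZ, !plus_INR, minus_INR by lia. rewrite plus_INR. simpl. ring.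
Qed.

Definition Qr b t K := rsum (b ^ K) (fun m => IZR (Wz b t K m) ^ 2).

Lemma Q_step b K x t (Hb : (2 <= b)%nat) (Hx : (x <= b)%nat) (Ht : (t < b ^ K)%nat) :
  Qr b (x + b * t) (S K) =
  INR (b - x) * (INR (b ^ K) * INR x ^ 2 + Qr b t K) +
  INR x * (INR (b ^ K) * (INR x - INR b) ^ 2 + Qr b (t + 1) K).
Proof.
  unfold Qr. change (b ^ S K)%nat with (b * b ^ K)%nat. rewrite rsum_mulsplit.
  rewrite (rsum_ext _ _ (fun m => rsum b (fun u =>
     (INR x - INR b * INR (kap b x u) + IZR (Wz b (t + kap b x u) K m)) ^ 2))).
  2:{ intros m Hm. apply rsum_ext. intros u Hu. rewrite Wz_step by auto. reflexivity. }
  rewrite rsum_swap.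
  assert (Hin : forall k, (k <= 1)%nat -> rsum (b ^ K) (fun m => (INR x - INR b * INR k + IZR (Wz b (t + k) K m)) ^ 2)
      = INR (b ^ K) * (INR x - INR b * INR k) ^ 2 + rsum (b ^ K) (fun m => IZR (Wz b (t + k) K m) ^ 2)).
  { intros k Hk.
    rewrite (rsum_ext _ _ (fun m => (INR x - INR b * INR k) ^ 2 + ((2 * (INR x - INR b * INR k)) * IZR (Wz b (t + k) K m) + IZR (Wz b (t + k) K m) ^ 2))) by (intros; ring).
    rewrite rsum_plus, rsum_const, rsum_plus, rsum_scal, W_sum_zero by lia. ring. }
  replace b with ((b - x) + x)%nat at 1 by lia. rewrite rsum_add.
  rewrite (rsum_ext (b - x) _ (fun _ => INR (b ^ K) * (INR x - INR b * INR 0) ^ 2 + rsum (b ^ K) (fun m => IZR (Wz b (t + 0) K m) ^ 2))).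
  2:{ intros u Hu. rewrite <- Hin by lia. unfold kap. replace (u + x <? b)%nat with true by (symmetry; apply Nat.ltb_lt; lia). reflexivity. }
  rewrite (rsum_ext x _ (fun _ => INR (b ^ K) * (INR x - INR b * INR 1) ^ 2 + rsum (b ^ K) (fun m => IZR (Wz b (t + 1) K m) ^ 2))).
  2:{ intros u Hu. rewrite <- Hin by lia. unfold kap. replace (b - x + u + x <? b)%nat with false by (symmetry; apply Nat.ltb_ge; lia). reflexivity. }
  rewrite !rsum_const. rewrite Nat.add_0_r. simpl INR. ring.
Qed.

Fixpoint Gf (b : nat) (ds : list nat) (c : nat) : R :=
  match ds with
  | [] => INR b * INR c
  | d :: ds' => INR (d + c) * INR (b - (d + c)) +
      (INR (b - (d + c)) * Gf b ds' 0 + INR (d + c) * Gf b ds' 1) / INR b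
  end.

Fixpoint val (b : nat) (ds : list nat) : nat :=
  match ds with [] => 0%nat | d :: ds' => (d + b * val b ds')%nat end.

Lemma val_lt b ds (Hb : (2 <= b)%nat) : List.Forall (fun d => (d < b)%nat) ds -> (val b ds < b ^ length ds)%nat.
Proof.
  induction 1; simpl; [lia|]. nia.
Qed.

Lemma Q_G b (Hb : (2 <= b)%nat) : forall ds, List.Forall (fun d => (d < b)%nat) ds -> forall c, (c <= 1)%nat ->
  Qr b (val b ds + c) (length ds) + INR b * INR (val b ds + c) = INR (b ^ length ds) * Gf b ds c.
Proof.
  assert (HB : 2 <= INR b) by (apply (le_INR 2); lia).
  induction 1 as [|d ds Hd Hds IH]; intros c Hc.
  - unfold Qr. simpl.
    assert (E : Wz b c 0 0 = 0%Z) by (unfold Wz; rewrite Nat.pow_0_r, Nat.mod_1_r; reflexivity).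
    rewrite E. simpl. ring.
  - simpl length. simpl val.
    pose proof (val_lt b ds Hb Hds) as Hv.
    replace (d + b * val b ds + c)%nat with ((d + c) + b * val b ds)%nat by lia.
    rewrite Q_step by (auto; lia).
    pose proof (IH 0%nat ltac:(lia)) as I0. pose proof (IH 1%nat ltac:(lia)) as I1.
    rewrite Nat.add_0_r in I0.
    simpl Gf. change (b ^ S (length ds))%nat with (b * b ^ length ds)%nat.
    rewrite mult_INR.
    replace (Qr b (val b ds) (length ds)) with (INR (b ^ length ds) * Gf b ds 0 - INR b * INR (val b ds)) by lra.
    replace (Qr b (val b ds + 1) (length ds)) with (INR (b ^ length ds) * Gf b ds 1 - INR b * INR (val b ds + 1)) by lra.
    rewrite minus_INR by lia. rewrite !plus_INR, mult_INR. simpl INR. field. lra.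
Qed.

Definition newb b (prev : option nat) d : bool :=
  match prev with
  | None => true
  | Some p => orb (andb (Nat.ltb 0 d) (Nat.ltb d (b - 1))) (negb (Nat.eqb d p))
  end.

Lemma bs_cons b prev d t :
  block_starts b prev (d :: t) = ((if newb b prev d then 1 else 0) + block_starts b (Some d) t)%nat.
Proof. reflexivity. Qed.

Definition ne_prev (prev : option nat) x : R :=
  match prev with Some p => if Nat.eqb p x then 0 else 1 | None => 1 end.

Definition badv b (prev : option nat) ds c : R :=
  match ds with
  | [] => if Nat.eqb c 0 then 1 else 0
  | d :: _ => if (Nat.eqb d 0 && Nat.eqb c 0)%bool then ne_prev prev 0
              else if (Nat.eqb d (b - 1) && Nat.eqb c 1)%bool then ne_prev prev (b - 1) else 0
  end.

Fixpoint nz_last (ds : list nat) : Prop :=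
  match ds with
  | [] => True
  | d :: t => match t with [] => d <> 0%nat | _ => nz_last t end
  end.

Lemma ne_prev_01 prev x : 0 <= ne_prev prev x <= 1.
Proof. destruct prev; simpl; [destruct (Nat.eqb _ _)|]; lra. Qed.

Lemma badv_01 b prev ds c : 0 <= badv b prev ds c <= 1.
Proof.
  destruct ds; simpl. destruct (Nat.eqb c 0); lra.
  destruct (_ && _)%bool. apply ne_prev_01. destruct (_ && _)%bool. apply ne_prev_01. lra.
Qed.

Lemma new0 b prev : INR (if newb b prev 0 then 1 else 0) = ne_prev prev 0.
Proof. destruct prev as [p|]; simpl; [|reflexivity]. destruct p; reflexivity. Qed.

Lemma newb1 b prev (Hb : (2 <= b)%nat) : INR (if newb b prev (b - 1) then 1 else 0) = ne_prev prev (b - 1).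
Proof.
  destruct prev as [p|]; simpl; [|reflexivity].
  rewrite Nat.ltb_irrefl, Bool.andb_false_r. simpl. rewrite Nat.eqb_sym. destruct (Nat.eqb p (b-1)); reflexivity.
Qed.

Lemma newm b prev d : (0 < d)%nat -> (d < b - 1)%nat -> newb b prev d = true.
Proof.
  intros H1 H2. destruct prev; simpl; [|reflexivity].
  apply Nat.ltb_lt in H1. apply Nat.ltb_lt in H2. rewrite H1, H2. reflexivity.
Qed.

Lemma mix B y G0 G1 L0 L1 : 0 < B -> 0 <= y <= B -> L0 <= G0 -> L1 <= G1 ->
  ((B - y) * L0 + y * L1) / B <= ((B - y) * G0 + y * G1) / B.
Proof.
  intros. unfold Rdiv. apply Rmult_le_compat_r. apply Rlt_le, Rinv_0_lt_compat; lra.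
  assert ((B - y) * L0 <= (B - y) * G0) by (apply Rmult_le_compat_l; lra).
  assert (y * L1 <= y * G1) by (apply Rmult_le_compat_l; lra). lra.
Qed.

Lemma lower_bound b (Hb : (2 <= b)%nat) : forall ds, List.Forall (fun d => (d < b)%nat) ds -> nz_last ds ->
  forall prev c, (c <= 1)%nat ->
  INR b / 4 * (INR (block_starts b prev ds) + 1 - badv b prev ds c) <= Gf b ds c.
Proof.
  assert (HB : 2 <= INR b) by (apply (le_INR 2); lia).
  induction 1 as [|d ds Hd Hds IH]; intros Hnz prev c Hc.
  - simpl. destruct c as [|[|c]]; simpl; [lra|lra|lia].
  - assert (Hnz' : nz_last ds) by (destruct ds; simpl in *; auto).
    rewrite bs_cons. rewrite plus_INR.
    cbn [Gf].
    assert (Hx : (d + c <= b)%nat) by (destruct (Nat.eq_dec d (b - 1)); lia).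
    pose proof (IH Hnz' (Some d) 0%nat ltac:(lia)) as I0.
    pose proof (IH Hnz' (Some d) 1%nat ltac:(lia)) as I1.
    set (S := INR (block_starts b (Some d) ds)) in *.
    set (y := INR (d + c)).
    assert (Hy : INR (b - (d + c)) = INR b - y) by (unfold y; rewrite minus_INR by lia; reflexivity).
    assert (Hy0 : 0 <= y <= INR b) by (unfold y; split; [apply pos_INR|apply le_INR; lia]).
    rewrite Hy.
    pose proof (mix (INR b) y _ _ _ _ ltac:(lra) Hy0 I0 I1) as M.
    set (b0 := badv b (Some d) ds 0) in *. set (b1 := badv b (Some d) ds 1) in *.
    pose proof (badv_01 b (Some d) ds 0) as B0. pose proof (badv_01 b (Some d) ds 1) as B1.
    fold b0 in B0. fold b1 in B1.
    assert (Mx : ((INR b - y) * (INR b / 4 * (S + 1 - b0)) + y * (INR b / 4 * (S + 1 - b1))) / INR b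
                 = INR b / 4 * (S + 1) - ((INR b - y) * b0 + y * b1) / 4) by (field; lra).
    rewrite Mx in M.
    set (G0 := Gf b ds 0) in *. set (G1 := Gf b ds 1) in *.
    enough (K : y * (INR b - y) - ((INR b - y) * b0 + y * b1) / 4 >=
                INR b / 4 * (INR (if newb b prev d then 1 else 0) - badv b prev (d :: ds) c)) by lra.
    assert (HB1 : (b - 1 <> 0)%nat) by lia.
    destruct (Nat.eq_dec d 0) as [Ed|Ed]; [|destruct (Nat.eq_dec d (b - 1)) as [Ed1|Ed1]].
    + subst d. rewrite new0.
      assert (Hb0 : b0 = 0).
      { unfold b0. destruct ds as [|e ds'].
        - simpl in Hnz. lia.
        - simpl. destruct (Nat.eqb e 0); simpl; [reflexivity|rewrite Bool.andb_false_r; reflexivity]. }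
      destruct c as [|[|c]]; [| |lia].
      * simpl badv. unfold y. simpl. rewrite Hb0. lra.
      * simpl badv. replace (Nat.eqb 0 (b - 1)) with false by (symmetry; apply Nat.eqb_neq; lia).
        simpl. unfold y. simpl INR. rewrite Hb0.
        pose proof (ne_prev_01 prev 0). destruct (b - 1)%nat as [|k] eqn:Ek; [lia|]. simpl. nra.
    + subst d. rewrite newb1 by auto.
      assert (Hb1 : b1 = 0).
      { unfold b1. destruct ds as [|e ds']. reflexivity.
        simpl. rewrite Bool.andb_false_r. rewrite Nat.eqb_refl. simpl. rewrite Bool.andb_true_r.
        destruct (Nat.eqb e (b - 1)); reflexivity. }
      destruct c as [|[|c]]; [| |lia].
      * simpl badv. replace (Nat.eqb (b - 1) 0) with false by (symmetry; apply Nat.eqb_neq; lia).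
        simpl. unfold y. rewrite Nat.add_0_r, minus_INR by lia. simpl INR. rewrite Hb1.
        pose proof (ne_prev_01 prev (b - 1)). rewrite Bool.andb_false_r. pose proof (badv_01 b (Some (b-1)%nat) ds 0). fold b0 in H0. nra.
      * simpl badv. replace (Nat.eqb (b - 1) 0) with false by (symmetry; apply Nat.eqb_neq; lia).
        rewrite Nat.eqb_refl. simpl. unfold y. replace (b - 1 + 1)%nat with b by lia. rewrite Hb1. nra.
    + assert (Hd0 : (0 < d)%nat) by lia. assert (Hd1 : (d < b - 1)%nat) by lia.
      rewrite newm by auto.
      assert (Hbad : badv b prev (d :: ds) c = 0).
      { simpl. replace (Nat.eqb d 0) with false by (symmetry; apply Nat.eqb_neq; lia).
        replace (Nat.eqb d (b - 1)) with false by (symmetry; apply Nat.eqb_neq; lia). reflexivity. }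
      rewrite Hbad.
      assert (Hy1 : 1 <= y <= INR b - 1).
      { unfold y. split. apply (le_INR 1); lia. replace (INR b - 1) with (INR (b - 1)) by (rewrite minus_INR by lia; simpl; ring). apply le_INR. lia. }
      simpl INR. nra.
Qed.

Definition live b (prev : option nat) c : R :=
  match prev with
  | Some p => if (Nat.eqb p 0 && Nat.eqb c 1)%bool then 1
              else if (Nat.eqb p (b - 1) && Nat.eqb c 0)%bool then 1 else 0
  | None => 0
  end.

Lemma live_nonneg b prev c : 0 <= live b prev c.
Proof. destruct prev; simpl; [destruct (_ && _)%bool; [|destruct (_ && _)%bool]|]; lra. Qed.

Lemma mix_up B y G0 G1 L0 L1 : 0 < B -> 0 <= y <= B -> G0 <= L0 -> G1 <= L1 ->
  ((B - y) * G0 + y * G1) / B <= ((B - y) * L0 + y * L1) / B.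
Proof. intros. apply mix; auto. Qed.

Lemma A_ge B : B <= B ^ 2 / 4 + 1.
Proof.
  assert (E : B ^ 2 / 4 + 1 - B = (B - 2) ^ 2 / 4) by field.
  pose proof (pow2_ge_0 (B - 2)). lra.
Qed.

Lemma upper_bound b (Hb : (2 <= b)%nat) : forall ds, List.Forall (fun d => (d < b)%nat) ds ->
  forall prev c, (c <= 1)%nat ->
  Gf b ds c <= (INR b ^ 2 / 4 + 1) * INR (block_starts b prev ds) + INR b + INR b * live b prev c.
Proof.
  assert (HB : 2 <= INR b) by (apply (le_INR 2); lia).
  induction 1 as [|d ds Hd Hds IH]; intros prev c Hc.
  - simpl. pose proof (live_nonneg b prev c).
    destruct c as [|[|c]]; simpl; [nra|nra|lia].
  - rewrite bs_cons, plus_INR. cbn [Gf].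
    assert (Hx : (d + c <= b)%nat) by (destruct (Nat.eq_dec d (b - 1)); lia).
    pose proof (IH (Some d) 0%nat ltac:(lia)) as I0.
    pose proof (IH (Some d) 1%nat ltac:(lia)) as I1.
    set (S := INR (block_starts b (Some d) ds)) in *.
    set (y := INR (d + c)).
    assert (Hy : INR (b - (d + c)) = INR b - y) by (unfold y; rewrite minus_INR by lia; reflexivity).
    assert (Hy0 : 0 <= y <= INR b) by (unfold y; split; [apply pos_INR|apply le_INR; lia]).
    rewrite Hy.
    pose proof (mix_up (INR b) y _ _ _ _ ltac:(lra) Hy0 I0 I1) as M.
    set (A := INR b ^ 2 / 4 + 1) in *.
    set (l0 := live b (Some d) 0) in *. set (l1 := live b (Some d) 1) in *.
    assert (Mx : ((INR b - y) * (A * S + INR b + INR b * l0) + y * (A * S + INR b + INR b * l1)) / INR b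
                 = A * S + INR b + (INR b - y) * l0 + y * l1) by (field; lra).
    rewrite Mx in M.
    set (G0 := Gf b ds 0) in *. set (G1 := Gf b ds 1) in *.
    enough (K : y * (INR b - y) + (INR b - y) * l0 + y * l1 <=
                A * INR (if newb b prev d then 1 else 0) + INR b * live b prev c) by lra.
    pose proof (live_nonneg b prev c) as Lp.
    assert (Hg : y * (INR b - y) <= INR b ^ 2 / 4).
    { assert (E : INR b ^ 2 / 4 - y * (INR b - y) = (INR b - 2 * y) ^ 2 / 4) by field.
      pose proof (pow2_ge_0 (INR b - 2 * y)). lra. }
    assert (HA : INR b <= A) by (unfold A; apply A_ge).
    assert (HA2 : INR b ^ 2 / 4 + 1 = A) by reflexivity.
    assert (HBL : 0 <= INR b * live b prev c) by (apply Rmult_le_pos; lra).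
    destruct (Nat.eq_dec d 0) as [Ed|Ed]; [|destruct (Nat.eq_dec d (b - 1)) as [Ed1|Ed1]].
    + subst d. rewrite new0.
      assert (El0 : l0 = 0) by (unfold l0, live; rewrite (proj2 (Nat.eqb_neq 0 (b - 1))) by lia; reflexivity).
      assert (El1 : l1 = 1) by reflexivity.
      rewrite El0, El1.
      destruct c as [|[|c]]; [| |lia]; unfold y; simpl INR.
      * pose proof (ne_prev_01 prev 0). assert (0 <= A) by lra. nra.
      * destruct prev as [[|p]|]; simpl.
        -- lra.
        -- simpl in Lp. nra.
        -- nra.
    + subst d. rewrite newb1 by auto.
      assert (El0 : l0 = 1).
      { unfold l0. simpl. replace (Nat.eqb (b - 1) 0) with false by (symmetry; apply Nat.eqb_neq; lia).
        rewrite Nat.eqb_refl. reflexivity. }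
      assert (El1 : l1 = 0).
      { unfold l1. simpl. replace (Nat.eqb (b - 1) 0) with false by (symmetry; apply Nat.eqb_neq; lia).
        simpl. rewrite Bool.andb_false_r. reflexivity. }
      rewrite El0, El1.
      destruct c as [|[|c]]; [| |lia]; unfold y.
      * rewrite Nat.add_0_r, minus_INR by lia. simpl INR.
        destruct prev as [p|]; unfold ne_prev, live in *.
        -- destruct (Nat.eqb p (b - 1)) eqn:Ep.
           ++ apply Nat.eqb_eq in Ep. subst p.
              rewrite (proj2 (Nat.eqb_neq (b - 1) 0)) by lia.
              rewrite Nat.eqb_refl. simpl. nra.
           ++ nra.
        -- nra.
      * replace (b - 1 + 1)%nat with b by lia.
        pose proof (ne_prev_01 prev (b - 1)). assert (0 <= A) by lra. nra.
    + assert (Hd0 : (0 < d)%nat) by lia. assert (Hd1 : (d < b - 1)%nat) by lia.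
      rewrite newm by auto.
      assert (El0 : l0 = 0).
      { unfold l0. simpl. replace (Nat.eqb d 0) with false by (symmetry; apply Nat.eqb_neq; lia).
        replace (Nat.eqb d (b - 1)) with false by (symmetry; apply Nat.eqb_neq; lia). reflexivity. }
      assert (El1 : l1 = 0).
      { unfold l1. simpl. replace (Nat.eqb d 0) with false by (symmetry; apply Nat.eqb_neq; lia).
        replace (Nat.eqb d (b - 1)) with false by (symmetry; apply Nat.eqb_neq; lia). reflexivity. }
      rewrite El0, El1. simpl INR. lra.
Qed.

Lemma digits_facts b (Hb : (2 <= b)%nat) n :
  List.Forall (fun d => (d < b)%nat) (digits b n) /\ val b (digits b n) = n /\ nz_last (digits b n).
Proof.
  induction n as [n IH] using (well_founded_induction lt_wf).
  rewrite digits_eq by auto. destruct (Nat.eqb n 0) eqn:E.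
  - apply Nat.eqb_eq in E. subst. simpl. auto.
  - apply Nat.eqb_neq in E.
    assert (Hlt : (n / b < n)%nat) by (apply Nat.div_lt; lia).
    destruct (IH _ Hlt) as (H1 & H2 & H3).
    destruct (split_digit b Hb n) as [En Hu].
    split; [|split].
    + constructor; auto.
    + simpl. rewrite H2. lia.
    + simpl. rewrite digits_eq by auto. destruct (Nat.eqb (n / b) 0) eqn:E2.
      * apply Nat.eqb_eq in E2. rewrite E2 in En. lia.
      * rewrite digits_eq in H3 by auto. rewrite E2 in H3. exact H3.
Qed.

Theorem theorem1 (b r : nat) (Hb : (2 <= b)%nat) (Hr : (1 <= r)%nat) :
  INR b / 4 * INR (rho b r) <= var_mu b r <= 2 * INR b ^ 2 * INR (rho b r).
Proof.
  assert (HB : 2 <= INR b) by (apply (le_INR 2); lia).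
  destruct (digits_facts b Hb r) as (F1 & F2 & F3).
  set (ds := digits b r) in *.
  set (K := length ds).
  assert (HrK : (r < b ^ K)%nat) by (rewrite <- F2; apply val_lt; auto).
  assert (HV : var_mu b r = Gf b ds 0).
  { rewrite (var_formula b r K) by (auto; lia).
    pose proof (Q_G b Hb ds F1 0%nat ltac:(lia)) as Q. rewrite Nat.add_0_r, F2 in Q. fold K in Q.
    unfold Qr in Q.
    assert (0 < INR (b ^ K)) by (apply lt_0_INR, powpos; auto).
    apply Rmult_eq_reg_l with (INR (b ^ K)); [|lra].
    rewrite <- Q. field. lra. }
  rewrite HV. unfold rho. fold ds.
  assert (Hne : ds <> []).
  { intros E. rewrite E in F2. simpl in F2. lia. }
  assert (Hrho : 1 <= INR (block_starts b None ds)).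
  { destruct ds as [|d t]; [congruence|]. rewrite bs_cons. simpl newb. rewrite plus_INR. simpl.
    pose proof (pos_INR (block_starts b (Some d) t)). lra. }
  split.
  - pose proof (lower_bound b Hb ds F1 F3 None 0%nat ltac:(lia)) as L.
    pose proof (badv_01 b None ds 0). nra.
  - pose proof (upper_bound b Hb ds F1 None 0%nat ltac:(lia)) as U. simpl live in U.
    set (rh := INR (block_starts b None ds)) in *.
    assert (H1 : 0 <= 7 / 4 * INR b ^ 2 - 1 - INR b) by (simpl; nra).
    assert (H2 : 0 <= (7 / 4 * INR b ^ 2 - 1) * (rh - 1)) by (apply Rmult_le_pos; simpl in *; nra).
    nra.
Qed.
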